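(* Let $S$ be a finite state space, $P$ a row-stochastic $|S|\times|S|$ matrix, $R\in\mathbb{R}^{|S|}$, $\gamma\in(0,1)$, $\beta\in(0,1)$, $d_\mu$ a probability vector on $S$, $f^\top=d_\mu^\top(I-\beta P)^{-1}$ with $f(s)>0$ for all $s$, and $\kappa=\min_s d_\mu(s)/f(s)$. Let $T(V)=R+\gamma PV$, let $V^\pi=(I-\gamma P)^{-1}R$ be its fixed point, let $\Phi$ be an $n\times|S|$ feature matrix (columns $\phi(s)\in\mathbb{R}^n$), and let $\Pi_f$ be the orthogonal projection onto $\{\Phi^\top\theta:\theta\in\mathbb{R}^n\}$ with respect to $\|v\|_f=\sqrt{\sum_s f(s)v(s)^2}$. Assume $\beta>\gamma^2(1-\kappa)$ and let $\theta^*$ satisfy $\Phi^\top\theta^*=\Pi_f T(\Phi^\top\theta^* )$. Then $$\|\Phi^\top\theta^*-V^\pi\|_f\le \frac{1}{\sqrt{1-\frac{\gamma^2}{\beta}(1-\kappa)}}\,\|\Pi_f V^\pi-V^\pi\|_f,$$ $$\|\Phi^\top\theta^*-V^\pi\|_{d_\mu}\le \frac{1}{\sqrt{\gamma\left(1-\frac{\gamma^2}{\beta}(1-\kappa)\right)}}\,\|\Pi_f V^\pi-V^\pi\|_f,$$ where $\|v\|_{d_\mu}=\sqrt{\sum_s d_\mu(s)v(s)^2}$.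
   Context: $P,R$ are the transition matrix and reward vector of the target policy $\pi$ in a finite MDP with discount $\gamma$; $d_\mu$ is the stationary state distribution of the behavior policy; $\theta^*$ is the limit of the ETD(0, $\beta$) algorithm, characterized as a solution of the projected fixed-point equation $V=\Pi_f T V$. *)

(* Defs.v *)
From HB Require Import structures.
From mathcomp Require Import all_boot all_order all_algebra.
From mathcomp Require Import reals.
Set Implicit Arguments. Unset Strict Implicit. Unset Printing Implicit Defensive.
Import Order.TTheory GRing.Theory Num.Theory.
Local Open Scope ring_scope.

Section Defs.
Variables (R : realType) (k : nat).

Definition row_stochastic (P : 'M[R]_k) : Prop :=
  (forall i j, 0 <= P i j) /\ (forall i, \sum_(j < k) P i j = 1).

Definition prob_vec (d : 'cV[R]_k) : Prop :=
  (forall i, 0 <= d i 0) /\ \sum_(i < k) d i 0 = 1.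

Definition emph_f (d : 'cV[R]_k) (beta : R) (P : 'M[R]_k) : 'cV[R]_k :=
  (invmx (1%:M - beta *: P))^T *m d.

Definition bellman (r : 'cV[R]_k) (gamma : R) (P : 'M[R]_k) (V : 'cV[R]_k)
  : 'cV[R]_k := r + gamma *: (P *m V).

Definition Vpi (r : 'cV[R]_k) (gamma : R) (P : 'M[R]_k) : 'cV[R]_k :=
  invmx (1%:M - gamma *: P) *m r.

Definition wdot (w u v : 'cV[R]_k) : R := \sum_(i < k) w i 0 * u i 0 * v i 0.
Definition wnorm (w v : 'cV[R]_k) : R := Num.sqrt (\sum_(i < k) w i 0 * v i 0 ^+ 2).

(* [is_proj_f f Phi v p] : p = Pi_f v, the orthogonal projection of v onto
   {Phi^T theta} w.r.t. the f-weighted inner product. *)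
Definition is_proj_f (n : nat) (f : 'cV[R]_k) (Phi : 'M[R]_(n, k))
  (v p : 'cV[R]_k) : Prop :=
  (exists theta : 'cV[R]_n, p = Phi^T *m theta) /\
  (forall theta : 'cV[R]_n, wdot f (v - p) (Phi^T *m theta) = 0).

End Defs.

(* Main.v *)
Require Import Defs.
From HB Require Import structures.
From mathcomp Require Import all_boot all_order all_algebra.
From mathcomp Require Import reals ring lra.
Import Order.TTheory GRing.Theory Num.Theory.
Local Open Scope ring_scope.

Lemma unit_IP (R : realType) k (P : 'M[R]_k) c :
  row_stochastic P -> 0 <= c < 1 -> (1%:M - c *: P) \in unitmx.
Proof.
move=> [P0 P1] /andP[c0 c1].
rewrite -unitmx_tr -row_free_unit; apply: inj_row_free => u Hu.
case: k P P0 P1 u Hu => [|k] P P0 P1 u Hu; first by apply/rowP => -[].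
have Hx : forall i, u 0 i = c * \sum_j P i j * u 0 j.
  move=> i; have := congr1 (fun M : 'M_(1,k.+1) => M 0 i) Hu.
  rewrite !mxE (bigD1 i) //= !mxE eqxx /=.
  under eq_bigr => j /negPf ji do rewrite !mxE eq_sym ji mulr0n.
  move=> H; rewrite (bigD1 i) //= mulrDr.
  have E : \sum_(j < k.+1 | j != i) u 0 j * (0 - c * P i j)
      = - (c * \sum_(j < k.+1 | j != i) P i j * u 0 j).
    by rewrite mulr_sumr -sumrN; apply: eq_bigr => j _; ring.
  rewrite E in H; set S := \sum_(j < k.+1 | j != i) P i j * u 0 j in H *; rewrite -[LHS]subr0 -H; ring.
case: (@arg_maxP _ _ _ ord0 xpredT (fun i => `|u 0 i|) isT) => i _ Hi.
have Hle : `|u 0 i| <= c * `|u 0 i|.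
  rewrite {1}Hx normrM ger0_norm //; apply: ler_wpM2l => //.
  apply: le_trans (ler_norm_sum _ _ _) _.
  rewrite -[X in _ <= X]mul1r -(P1 i) mulr_suml; apply: ler_sum => j _.
  by rewrite normrM ger0_norm // ler_wpM2l //; exact: (Hi j isT).
have ui0 : `|u 0 i| = 0.
  apply/eqP; rewrite eq_le normr_ge0 andbT.
  have : (1 - c) * `|u 0 i| <= 0 by rewrite mulrBl mul1r subr_le0.
  by rewrite pmulr_rle0 // subr_gt0.
apply/rowP => j; rewrite mxE; apply/eqP; rewrite -normr_eq0 eq_le normr_ge0 andbT.
by rewrite -ui0; exact: (Hi j isT).
Qed.

Set Implicit Arguments. Unset Strict Implicit.
Section Helpers.
Variables (R : realType) (k : nat).

Definition Qn (w v : 'cV[R]_k) : R := \sum_(i < k) w i 0 * v i 0 ^+ 2.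

Lemma QD (w u v : 'cV[R]_k) : Qn w (u + v) = Qn w u + Qn w v + 2 * wdot w u v.
Proof.
rewrite /Qn /wdot mulr_sumr -!big_split /=; apply: eq_bigr => i _; rewrite !mxE; ring.
Qed.

Lemma wdotC (w u v : 'cV[R]_k) : wdot w u v = wdot w v u.
Proof. by apply: eq_bigr => i _; ring. Qed.

Lemma wdotB (w u v z : 'cV[R]_k) : wdot w (u - v) z = wdot w u z - wdot w v z.
Proof.
rewrite /wdot -sumrB; apply: eq_bigr => i _; rewrite !mxE; ring.
Qed.

Lemma wdotN (w u z : 'cV[R]_k) : wdot w (- u) z = - wdot w u z.
Proof.
rewrite /wdot -sumrN; apply: eq_bigr => i _; rewrite !mxE; ring.
Qed.

Lemma Q_ge0 (w v : 'cV[R]_k) : (forall i, 0 <= w i 0) -> 0 <= Qn w v.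
Proof. by move=> H; apply: sumr_ge0 => i _; rewrite mulr_ge0 // sqr_ge0. Qed.

Lemma jensen (w v : 'I_k -> R) : (forall j, 0 <= w j) -> \sum_j w j = 1 ->
  (\sum_j w j * v j) ^+ 2 <= \sum_j w j * v j ^+ 2.
Proof.
move=> w0 w1; set m := \sum_j w j * v j.
have H : 0 <= \sum_j w j * (v j - m) ^+ 2.
  by apply: sumr_ge0 => j _; rewrite mulr_ge0 // sqr_ge0.
have E : \sum_j w j * (v j - m) ^+ 2 =
   \sum_j w j * v j ^+ 2 - \sum_j (2 * m) * (w j * v j) + \sum_j m ^+ 2 * w j.
  rewrite -sumrB -big_split /=; apply: eq_bigr => j _; ring.
move: H; rewrite E -!mulr_sumr w1 -/m => H.
rewrite -subr_ge0; apply: le_trans H _; rewrite le_eqVlt; apply/orP; left; apply/eqP; ring.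
Qed.

End Helpers.

Theorem corollary1 (R : realType) (k n : nat)
  (P : 'M[R]_k) (r : 'cV[R]_k) (gamma beta : R) (d : 'cV[R]_k)
  (Phi : 'M[R]_(n, k)) (kappa : R) (theta_star : 'cV[R]_n) (piV : 'cV[R]_k) :
  row_stochastic P ->
  0 < gamma < 1 -> 0 < beta < 1 ->
  prob_vec d ->
  (forall s, 0 < (emph_f d beta P) s 0) ->
  (* kappa = min_s d(s) / f(s) *)
  kappa \in [seq d s 0 / (emph_f d beta P) s 0 | s <- enum 'I_k] ->
  (forall s, kappa <= d s 0 / (emph_f d beta P) s 0) ->
  beta > gamma ^+ 2 * (1 - kappa) ->
  (* Phi^T theta_star = Pi_f T (Phi^T theta_star) *)
  is_proj_f (emph_f d beta P) Phi (bellman r gamma P (Phi^T *m theta_star))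
    (Phi^T *m theta_star) ->
  (* piV = Pi_f V^pi *)
  is_proj_f (emph_f d beta P) Phi (Vpi r gamma P) piV ->
  wnorm (emph_f d beta P) (Phi^T *m theta_star - Vpi r gamma P)
    <= (Num.sqrt (1 - gamma ^+ 2 / beta * (1 - kappa)))^-1
       * wnorm (emph_f d beta P) (piV - Vpi r gamma P)
  /\
  wnorm d (Phi^T *m theta_star - Vpi r gamma P)
    <= (Num.sqrt (gamma * (1 - gamma ^+ 2 / beta * (1 - kappa))))^-1
       * wnorm (emph_f d beta P) (piV - Vpi r gamma P).
Proof.
move=> HP /andP[g0 g1] /andP[b0 b1] Hd Fpos _ Hkmin Hbk [_ O1] [[tp ->] O2].
have [P0 P1] := HP.
set F := emph_f d beta P in Fpos Hkmin O1 O2 *.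
set V := Vpi r gamma P in O2 *.
set x := Phi^T *m theta_star in O1 *.
set p := Phi^T *m tp in O2 *.
have F0 : forall i, 0 <= F i 0 by move=> i; apply: ltW.
have fV : V = r + gamma *: (P *m V).
  have U : (1%:M - gamma *: P) \in unitmx by apply: unit_IP; rewrite ?(ltW g0).
  have AV : (1%:M - gamma *: P) *m V = r by rewrite /V /Vpi mulmxA mulmxV // mul1mx.
  move: AV; rewrite mulmxBl mul1mx -scalemxAl => <-; by rewrite subrK.
have fF : forall j, d j 0 = F j 0 - beta * \sum_i F i 0 * P i j.
  have U : (1%:M - beta *: P) \in unitmx by apply: unit_IP; rewrite ?(ltW b0).
  have HAF : (1%:M - beta *: P)^T *m F = d.
    by rewrite /F /emph_f mulmxA -trmx_mul mulVmx // trmx1 mul1mx.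
  have E : d = (F^T *m (1%:M - beta *: P))^T by rewrite trmx_mul trmxK HAF.
  move=> j; rewrite E mulmxBr mulmx1 -scalemxAr !mxE; congr (_ - _ * _).
  by apply: eq_bigr => i _; rewrite !mxE.
have dleF : forall j, d j 0 <= F j 0.
  move=> j; rewrite fF gerBl mulr_ge0 ?(ltW b0) //.
  by apply: sumr_ge0 => i _; rewrite mulr_ge0.
have kap : forall j, kappa * F j 0 <= d j 0.
  by move=> j; rewrite -ler_pdivlMr ?Fpos // Hkmin.
set a := gamma ^+ 2 / beta * (1 - kappa).
have a1 : 0 < 1 - a.
  by rewrite subr_gt0 /a mulrAC ltr_pdivrMr // mul1r.
have contr : forall e, Qn F (gamma *: (P *m e)) <= a * Qn F e.
  move=> e; rewrite /Qn.
  apply: le_trans (_ : _ <= \sum_i F i 0 * (gamma^+2 * \sum_j P i j * e j 0 ^+ 2)) _.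
    apply: ler_sum => i _; apply: ler_wpM2l; first exact: F0.
    rewrite !mxE exprMn ler_wpM2l ?sqr_ge0 //.
    exact: (@jensen _ _ (fun j => P i j) (fun j => e j 0) (P0 i) (P1 i)).
  have -> : \sum_i F i 0 * (gamma^+2 * \sum_j P i j * e j 0 ^+ 2)
      = gamma^+2 * \sum_j (\sum_i F i 0 * P i j) * e j 0 ^+ 2.
    transitivity (\sum_i \sum_j gamma^+2 * (F i 0 * P i j * e j 0 ^+ 2)).
      apply: eq_bigr => i _; rewrite mulr_sumr mulr_sumr; apply: eq_bigr => j _; ring.
    rewrite exchange_big mulr_sumr; apply: eq_bigr => j _.
    rewrite mulr_suml mulr_sumr; apply: eq_bigr => i _; ring.
  rewrite !mulr_sumr; apply: ler_sum => j _.
  rewrite mulrA [a * _]mulrA; apply: ler_wpM2r; first exact: sqr_ge0.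
  set S := \sum_i F i 0 * P i j.
  have HS : beta * S = F j 0 - d j 0.
    by rewrite fF -/S; ring.
  rewrite -(ler_pM2l b0).
  have -> : beta * (gamma^+2 * S) = gamma^+2 * (F j 0 - d j 0) by rewrite -HS; ring.
  have -> : beta * (a * F j 0) = gamma^+2 * ((1 - kappa) * F j 0).
    by rewrite /a; field; rewrite gt_eqF.
  apply: ler_wpM2l; first exact: sqr_ge0.
  have := kap j; rewrite mulrBl mul1r; lra.
set e := x - V.
have Hg : bellman r gamma P x - V = gamma *: (P *m e).
  by rewrite /bellman [X in _ - X]fV /e mulmxBr scalerBr opprD addrACA subrr add0r.
have Hy : x - p = Phi^T *m (theta_star - tp) by rewrite mulmxBr.
have Ogy : wdot F (gamma *: (P *m e) - (x - p)) (x - p) = 0.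
  have -> : gamma *: (P *m e) - (x - p) = (bellman r gamma P x - x) - (V - p).
    rewrite -Hg; apply/matrixP => i j; rewrite !mxE; ring.
  by rewrite wdotB Hy O1 O2 subrr.
have Ope : wdot F (x - p) (p - V) = 0.
  by rewrite wdotC -opprB wdotN Hy O2 oppr0.
have Q1 : Qn F (x - p) <= Qn F (gamma *: (P *m e)).
  have -> : gamma *: (P *m e) = (x - p) + (gamma *: (P *m e) - (x - p)).
    by rewrite addrC subrK.
  by rewrite [X in _ <= X]QD wdotC Ogy mulr0 addr0 lerDl Q_ge0.
have Q2 : Qn F e = Qn F (x - p) + Qn F (p - V).
  have -> : e = (x - p) + (p - V) by rewrite /e addrA subrK.
  by rewrite QD Ope mulr0 addr0.
have Main : (1 - a) * Qn F e <= Qn F (p - V).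
  have := contr e; move: Q1 Q2; rewrite mulrBl mul1r.
  set q1 := Qn F (x - p); set q2 := Qn F (p - V); set q3 := Qn F _; set q := Qn F e.
  set aq := a * q; lra.
have wQ : forall w v, wnorm w v = Num.sqrt (Qn w v) by [].
have N1 : wnorm F e <= (Num.sqrt (1 - a))^-1 * wnorm F (p - V).
  rewrite ler_pdivlMl ?sqrtr_gt0 // !wQ -sqrtrM; last exact: ltW a1.
  exact: ler_wsqrtr.
split => //.
apply: le_trans (_ : wnorm d e <= wnorm F e) _.
  rewrite !wQ; apply: ler_wsqrtr; apply: ler_sum => i _.
  by apply: ler_wpM2r; [exact: sqr_ge0 | exact: dleF].
apply: le_trans N1 _; apply: ler_wpM2r; first exact: sqrtr_ge0.
rewrite lef_pV2 ?posrE ?sqrtr_gt0 ?mulr_gt0 //.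
by apply: ler_wsqrtr; rewrite ger_pMl // ltW.
Qed.
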